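(* Let $G$ be a compact abelian group with discrete dual group $\Gamma$, let $N = p_1^{n_1} \cdots p_k^{n_k}$ with distinct primes $p_i$ and $n_i \in \mathbb{N}$, and let $E \subset \Gamma$. Then $E$ is $N$-PR if and only if, for all $1 \le i \le k$, the map $\pi_{p_i^{n_i}}$ is one-to-one on $E$ and $\pi_{p_i^{n_i}}(E)$ is $p_i$-PR as a subset of $\Gamma/\Gamma_{p_i^{n_i}}$.
   Context: For a discrete abelian group $\Delta$ with compact dual $\widehat{\Delta}$ and $M \in \mathbb{N}$, a subset $E \subset \Delta$ is $M$-PR if for every function $\varphi: E \to \mathbb{Z}_M$ (the $M$-th roots of unity in the unit circle) there exists $x \in \widehat{\Delta}$ with $\varphi(\gamma) = \gamma(x)$ for all $\gamma \in E$. Let $\Gamma_0$ be the torsion subgroup of $\Gamma$; for a prime $p$ and $m \in \mathbb{N}$, $\Gamma_{p^m}$ is the subgroup of $\Gamma_0$ of elements whose order is not divisible by $p^m$, and $\pi_{p^m}: \Gamma \to \Gamma/\Gamma_{p^m}$ is the quotient map. *)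

(* Defs.v *)
From HB Require Import structures.
From mathcomp Require Import all_boot all_order all_algebra.
From mathcomp Require Import reals complex.
Set Implicit Arguments. Unset Strict Implicit. Unset Printing Implicit Defensive.
Import Order.TTheory GRing.Theory Num.Theory.
Local Open Scope ring_scope.

(* A (discrete) abelian group Gamma is a zmodType; its
   compact dual consists of ALL group homomorphisms Gamma -> T. *)

Definition is_character (R : realType) (Gamma : zmodType) (x : Gamma -> R[i]) : Prop :=
  (forall g : Gamma, `|x g| = 1) /\ (forall a b : Gamma, x (a + b) = x a * x b).

(* E is M-PR: every phi : E -> Z_M (M-th roots of unity) is the restriction
   to E of a character.  Functions on E are represented by functions on Gamma
   (values off E are irrelevant). *)
Definition PR (R : realType) (Gamma : zmodType) (M : nat) (E : Gamma -> Prop) : Prop :=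
  forall phi : Gamma -> R[i], (forall g, E g -> phi g ^+ M = 1) ->
  exists x : Gamma -> R[i], is_character x /\ (forall g, E g -> x g = phi g).

Definition elt_order (Gamma : zmodType) (g : Gamma) (n : nat) : Prop :=
  (0 < n)%N /\ g *+ n = 0 /\ (forall j : nat, (0 < j)%N -> (j < n)%N -> g *+ j <> 0).

Definition Gamma_pm (Gamma : zmodType) (p m : nat) (g : Gamma) : Prop :=
  exists n, elt_order g n /\ ~~ (p ^ m %| n)%N.

Definition is_quotient_map (Gamma Q : zmodType) (H : Gamma -> Prop) (pi : Gamma -> Q) : Prop :=
  (forall a b, pi (a - b) = pi a - pi b) /\
  (forall q : Q, exists g, pi g = q) /\
  (forall g, pi g = 0 <-> H g).

Definition img (Gamma Q : Type) (f : Gamma -> Q) (E : Gamma -> Prop) : Q -> Prop :=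
  fun q => exists2 g, E g & f g = q.

(* Main.v *)
Require Import Defs.
From HB Require Import structures.
From mathcomp Require Import all_boot all_order all_algebra all_field all_solvable.
From mathcomp Require Import reals complex.
From mathcomp Require Import boolp classical_sets.
Set Implicit Arguments. Unset Strict Implicit. Unset Printing Implicit Defensive.
Import Order.TTheory GRing.Theory Num.Theory.
Local Open Scope ring_scope.

Lemma big_sub_uniq (R : Type) (idx : R) (op : Monoid.com_law idx) (T : eqType)
  (s u : seq T) (F : T -> R) : uniq s -> uniq u -> {subset s <= u} ->
  \big[op/idx]_(e <- s) F e = \big[op/idx]_(e <- u | e \in s) F e.
Proof.
move=> us uu su; rewrite -[RHS]big_filter; apply: perm_big.
apply: uniq_perm => //; first exact: filter_uniq.
move=> x; rewrite mem_filter; case xs: (x \in s) => //=; by rewrite su.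
Qed.

Section PC.
Variables (G : zmodType) (F : numFieldType).
Implicit Types (S : G -> Prop) (f : G -> F).

Definition subgrp S := S 0 /\ forall a b, S a -> S b -> S (a - b).
Definition pchar S f := subgrp S /\ (forall a, S a -> `|f a| = 1) /\
  (forall a b, S a -> S b -> f (a + b) = f a * f b).

Lemma sgN S a : subgrp S -> S a -> S (- a).
Proof. by move=> [S0 SB] Sa; rewrite -sub0r; apply: SB. Qed.

Lemma sgD S a b : subgrp S -> S a -> S b -> S (a + b).
Proof. by move=> hS Sa Sb; rewrite -[b]opprK; apply: hS.2 => //; apply: sgN. Qed.

Lemma sgMn S a n : subgrp S -> S a -> S (a *+ n).
Proof.
move=> hS Sa; elim: n => [|n IH]; first by rewrite mulr0n; exact: hS.1.
by rewrite mulrS; apply: sgD.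
Qed.

Lemma sgMz S a j : subgrp S -> S a -> S (a *~ j).
Proof.
move=> hS Sa; case: j => n /=; first exact: sgMn.
by rewrite NegzE mulrNz; apply: sgN => //; rewrite -pmulrn; apply: sgMn.
Qed.

Lemma pc_neq0 S f a : pchar S f -> S a -> f a != 0.
Proof. by move=> [_ [hn _]] Sa; rewrite -normr_eq0 hn // oner_eq0. Qed.

Lemma pc0 S f : pchar S f -> f 0 = 1.
Proof.
move=> hf; have S0 := hf.1.1; have nz := pc_neq0 hf S0.
have := hf.2.2 0 0 S0 S0; rewrite addr0 => h.
by apply: (mulfI nz); rewrite mulr1 -h.
Qed.

Lemma pcN S f a : pchar S f -> S a -> f (- a) = (f a)^-1.
Proof.
move=> hf Sa; have h := hf.2.2 a (- a) Sa (sgN hf.1 Sa).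
rewrite subrr (pc0 hf) in h.
by rewrite -[f (- a)](mulKf (pc_neq0 hf Sa)) -h mulr1.
Qed.

Lemma pcB S f a b : pchar S f -> S a -> S b -> f (a - b) = f a / f b.
Proof. by move=> hf Sa Sb; rewrite hf.2.2 ?(pcN hf) //; apply: sgN hf.1 Sb. Qed.

Lemma pcMn S f a n : pchar S f -> S a -> f (a *+ n) = f a ^+ n.
Proof.
move=> hf Sa; elim: n => [|n IH]; first by rewrite mulr0n expr0 (pc0 hf).
by rewrite mulrS exprS hf.2.2 ?IH //; apply: sgMn hf.1 Sa.
Qed.

Lemma pcMz S f a j : pchar S f -> S a -> f (a *~ j) = f a ^ j.
Proof.
move=> hf Sa; case: j => n; first by rewrite -pmulrn -exprnP; exact: (pcMn n hf Sa).
rewrite NegzE mulrNz (pcN hf); last by rewrite -pmulrn; apply: sgMn hf.1 Sa.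
by rewrite -pmulrn (pcMn _ hf Sa) -exprnN.
Qed.

Definition lc (s : seq G) (c : G -> int) := \sum_(e <- s) e *~ c e.
Definition lp f (s : seq G) (c : G -> int) := \prod_(e <- s) f e ^ c e.

Lemma pc_lc S f s c : pchar S f -> (forall e, e \in s -> S e) ->
  S (lc s c) /\ f (lc s c) = lp f s c.
Proof.
move=> hf; rewrite /lc /lp; elim: s => [|a s IH] hs.
  by rewrite !big_nil (pc0 hf); split => //; exact: hf.1.1.
have Sa : S a by apply: hs; rewrite inE eqxx.
have [IH1 IH2] : S (\sum_(e <- s) e *~ c e) /\
   f (\sum_(e <- s) e *~ c e) = \prod_(e <- s) f e ^ c e.
  by apply: IH => e es; apply: hs; rewrite inE es orbT.
rewrite !big_cons; split; first by apply: sgD hf.1 _ IH1; apply: sgMz hf.1 Sa.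
by rewrite hf.2.2 ?IH2 ?(pcMz _ hf) //; apply: sgMz hf.1 Sa.
Qed.

Lemma merge s c s' c' : uniq s -> uniq s' ->
  let u := undup (s ++ s') in
  let d := fun e => (if e \in s then c e else 0) - (if e \in s' then c' e else 0) in
  lc u d = lc s c - lc s' c' /\
  (forall f, (forall e, e \in u -> f e != 0) -> lp f u d = lp f s c / lp f s' c').
Proof.
move=> us us' u d.
have uu : uniq u by apply: undup_uniq.
have su : {subset s <= u} by move=> x xs; rewrite mem_undup mem_cat xs.
have su' : {subset s' <= u} by move=> x xs; rewrite mem_undup mem_cat xs orbT.
split.
  rewrite /lc (big_sub_uniq _ _ us uu su) (big_sub_uniq _ _ us' uu su').
  rewrite !(big_mkcond (fun e => e \in _)) -sumrB; apply: eq_bigr => e _.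
  by rewrite /d mulrzBr; case: (e \in s); case: (e \in s') => //=; rewrite mulr0z.
move=> f nz.
rewrite /lp (big_sub_uniq _ _ us uu su) (big_sub_uniq _ _ us' uu su').
rewrite !(big_mkcond (fun e => e \in _)) -prodf_div.
apply: eq_big_seq => e eu; rewrite /d expfzDr ?(nz e eu) // -invr_expz.
by case: (e \in s); case: (e \in s') => //=; rewrite ?expr0z ?invr1 ?mulr1 ?mul1r.
Qed.

End PC.

Lemma norm_exprz1 (F : numFieldType) (w : F) j : `|w| = 1 -> `|w ^ j| = 1.
Proof.
move=> hw; case: j => n /=; first by rewrite -exprnP normrX hw expr1n.
by rewrite NegzE -exprnN normfV normrX hw expr1n invr1.
Qed.

Lemma subrBB (G : zmodType) (a b x y : G) : a - b - (x - y) = (a - x) - (b - y).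
Proof. by rewrite !opprB [LHS]addrACA [RHS]addrACA [- b - x]addrC. Qed.

Section Ext.
Variables (G : zmodType) (F : numClosedFieldType).
Implicit Types (S : G -> Prop) (f : G -> F).

Lemma exists_w S f g : pchar S f ->
  exists w : F, `|w| = 1 /\ forall j, S (g *~ j) -> f (g *~ j) = w ^ j.
Proof.
move=> hf; have hS := hf.1.
case: (pselect (exists m, `[< (0 < m)%N /\ S (g *+ m) >])) => [ex|nex].
  case: (ex_minnP ex) => m /asboolP [m0 Sm] mmin.
  exists (m.-root (f (g *+ m))); split.
    by rewrite norm_rootC hf.2.1 // rootC1.
  move=> j Sj.
  have mz : (m%:Z != 0) by rewrite eqz_nat -lt0n.
  have mz' : (0 < m%:Z) by rewrite ltz_nat.
  have [r Er] : exists r : nat, (j %% m)%Z = r.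
    by exists `|(j %% m)%Z|%N; rewrite gez0_abs // modz_ge0.
  have r0 : r = 0%N.
    apply/eqP; rewrite -leqn0; rewrite leqNgt; apply/negP => r0.
    have Sr : S (g *+ r).
      have -> : g *+ r = g *~ j - (g *+ m) *~ (j %/ m)%Z.
        have Er2 : r%:Z = j - m%:Z * (j %/ m)%Z.
          by rewrite -Er {2}(divz_eq j m) [_ * m%:Z]mulrC addrC addKr.
        by rewrite !pmulrn -mulrzA Er2 mulrzBr.
      apply: hS.2 => //; apply: sgMz => //; exact: sgMn.
    have := mmin r (asboolT (conj r0 Sr)).
    have : (r%:Z < m%:Z) by rewrite -Er ltz_pmod.
    by rewrite ltz_nat => /leq_trans h /h; rewrite ltnn.
  have Ej : j = (j %/ m)%Z * m by rewrite {1}(divz_eq j m) Er r0 addr0.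
  rewrite Ej [_ * m%:Z]mulrC mulrzA -pmulrn (pcMz _ hf) ?(sgMn _ hS Sm) //.
  by rewrite -[in LHS](rootCK m0 (f (g *+ m))) exprnP exprz_exp.
exists 1; split; first by rewrite normr1.
move=> j Sj; rewrite exp1rz.
have -> : j = 0.
  case: j Sj => n Sn.
    case: n Sn => // n Sn; exfalso; apply: nex; exists n.+1.
    by apply: asboolT.
  exfalso; apply: nex; exists n.+1; apply: asboolT; split => //.
  by move: Sn; rewrite NegzE mulrNz -pmulrn => /(sgN hS); rewrite opprK.
by rewrite mulr0z (pc0 hf).
Qed.


Section Step.
Variables (S : G -> Prop) (f : G -> F) (g : G) (w : F).
Hypotheses (hf : pchar S f) (hw : `|w| = 1)
  (hwS : forall j, S (g *~ j) -> f (g *~ j) = w ^ j).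

Definition S' a := exists k : int, S (a - g *~ k).
Definition kc a : int := match pselect (S' a) with
  | left h => proj1_sig (cid h) | right _ => 0 end.
Definition f' a := f (a - g *~ kc a) * w ^ kc a.

Lemma w_neq0 : w != 0.
Proof. by rewrite -normr_eq0 hw oner_eq0. Qed.

Lemma f'E a k : S (a - g *~ k) -> f' a = f (a - g *~ k) * w ^ k.
Proof.
move=> Sk; have hS := hf.1.
rewrite /f' /kc; case: pselect => [h|nh]; last by exfalso; apply: nh; exists k.
case: (cid h) => k0 Sk0 /=.
have Sd : S (g *~ (k - k0)).
  have -> : g *~ (k - k0) = (a - g *~ k0) - (a - g *~ k).
    by rewrite mulrzBr opprB [RHS]addrC [RHS]addrA subrK.
  exact: hS.2.
have -> : a - g *~ k0 = (a - g *~ k) + g *~ (k - k0).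
  by rewrite mulrzBr addrA subrK.
rewrite hf.2.2 // hwS // -mulrA -expfzDr ?w_neq0 //.
by rewrite subrK.
Qed.

Lemma step_pchar : pchar S' f'.
Proof.
have hS := hf.1.
split; [split|split].
- by exists 0; rewrite mulr0z subr0; exact: hS.1.
- move=> a b [ka Sa] [kb Sb]; exists (ka - kb).
  have -> : a - b - g *~ (ka - kb) = (a - g *~ ka) - (b - g *~ kb).
    by rewrite mulrzBr subrBB.
  exact: hS.2.
- move=> a [k Sk]; rewrite (f'E Sk) normrM hf.2.1 // norm_exprz1 // mulr1.
  done.
move=> a b [ka Sa] [kb Sb].
have Sab : S (a + b - g *~ (ka + kb)).
  have -> : a + b - g *~ (ka + kb) = (a - g *~ ka) + (b - g *~ kb).
    by rewrite mulrzDr opprD addrACA.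
  exact: sgD.
rewrite (f'E Sab) (f'E Sa) (f'E Sb).
have -> : a + b - g *~ (ka + kb) = (a - g *~ ka) + (b - g *~ kb).
  by rewrite mulrzDr opprD addrACA.
rewrite hf.2.2 // expfzDr ?w_neq0 //.
by rewrite -!mulrA; congr (_ * _); rewrite [RHS]mulrC -!mulrA; congr (_ * _); rewrite mulrC.
Qed.

Lemma step_ext a : S a -> S' a /\ f' a = f a.
Proof.
move=> Sa; have Sa0 : S (a - g *~ 0) by rewrite mulr0z subr0.
by split; [exists 0 | rewrite (f'E Sa0) mulr0z subr0 expr0z mulr1].
Qed.

Lemma step_g : S' g.
Proof. by exists 1; rewrite mulr1z subrr; exact: hf.1.1. Qed.

End Step.

Lemma ext_from_base S0 f0 : pchar S0 f0 ->
  exists chi : G -> F, pchar (fun _ => True) chi /\ forall y, S0 y -> chi y = f0 y.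
Proof.
move=> h0.
pose good (p : (G -> Prop) * (G -> F)) :=
  pchar p.1 p.2 /\ forall y, S0 y -> p.1 y /\ p.2 y = f0 y.
pose T := {p | good p}.
pose Rl (x y : T) := `[< forall a, (sval x).1 a ->
   (sval y).1 a /\ (sval y).2 a = (sval x).2 a >].
have g0 : good (S0, f0) by split => // y Sy.
pose t0 : T := exist _ (S0, f0) g0.
have [t tmax] : exists t, premaximal Rl t.
  apply: (ZL_preorder t0).
  - by move=> x; apply/asboolP => a Sa.
  - move=> x y z /asboolP hxy /asboolP hyz; apply/asboolP => a Sa.
    have [Sya eya] := hxy a Sa; have [Sza eza] := hyz a Sya.
    by split => //; rewrite eza eya.
  move=> A Atot; case: (pselect (exists x, A x)) => [[x0 Ax0]|nA]; last first.
    by exists t0 => s As; exfalso; apply: nA; exists s.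
  pose Su a := exists x, A x /\ (sval x).1 a.
  pose fu a := match pselect (Su a) with
    | left h => (sval (proj1_sig (cid h))).2 a | right _ => 0 end.
  have fuE : forall x a, A x -> (sval x).1 a -> fu a = (sval x).2 a.
    move=> x a Ax Sxa; rewrite /fu; case: pselect => [h|nh]; last first.
      by exfalso; apply: nh; exists x.
    case: (cid h) => y [Ay Sya] /=.
    case: (Atot x y Ax Ay) => /asboolP H.
      by have [_ ->] := H a Sxa.
    by have [_ ->] := H a Sya.
  have common : forall a b, Su a -> Su b ->
      exists z, [/\ A z, (sval z).1 a & (sval z).1 b].
    move=> a b [x [Ax Sxa]] [y [Ay Syb]].
    case: (Atot x y Ax Ay) => /asboolP H.
      by exists y; split => //; have [] := H a Sxa.
    by exists x; split => //; have [] := H b Syb.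
  have gu : good (Su, fu).
    split; [split; [split|split] | ] => /=.
    - exists x0; split => //; exact: (proj2_sig x0).1.1.1.
    - move=> a b Sa Sb; have [z [Az Sza Szb]] := common a b Sa Sb.
      exists z; split => //; exact: (proj2_sig z).1.1.2.
    - move=> a [x [Ax Sxa]]; rewrite (fuE x a Ax Sxa); exact: (proj2_sig x).1.2.1.
    - move=> a b Sa Sb; have [z [Az Sza Szb]] := common a b Sa Sb.
      have hz := (proj2_sig z).1.
      rewrite (fuE z a Az Sza) (fuE z b Az Szb) (fuE z (a + b) Az) ?hz.2.2 //.
      exact: sgD hz.1 Sza Szb.
    - move=> y Sy; have [Sx0y ex0y] := (proj2_sig x0).2 y Sy.
      split; first by exists x0.
      by rewrite (fuE x0 y Ax0 Sx0y).
  exists (exist _ (Su, fu) gu) => s As; apply/asboolP => a Ssa /=.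
  by split; [exists s | rewrite (fuE s a As Ssa)].
have [ht hbase] := proj2_sig t.
have full : forall g, (sval t).1 g.
  move=> g; case: (pselect ((sval t).1 g)) => // ng; exfalso.
  have [w [hw hwS]] := exists_w g ht.
  have gt' : good (S' (sval t).1 g, f' (sval t).1 (sval t).2 g w).
    split; first exact: step_pchar.
    move=> y Sy; have [Sty ety] := hbase y Sy.
    have [] := step_ext ht hw hwS Sty; split => //=.
    by rewrite -ety.
  pose t' : T := exist _ _ gt'.
  have Rtt' : Rl t t' by apply/asboolP => a Sa; exact: step_ext.
  have /asboolP H := tmax t' Rtt'.
  by have [] := H g (step_g g ht).
exists (sval t).2; split; last by move=> y Sy; exact: (hbase y Sy).2.
split; [split|split] => //; first by move=> a _; exact: ht.2.1.
by move=> a b _ _; exact: ht.2.2.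
Qed.

End Ext.

Section Base.
Variables (G : zmodType) (F : numClosedFieldType).

Lemma lp_neq0 (phi : G -> F) s c : (forall e, e \in s -> phi e != 0) -> lp phi s c != 0.
Proof.
move=> nz; rewrite /lp prodf_seq_neq0; apply/allP => e es /=.
exact: expfz_neq0 (nz e es).
Qed.

Lemma lp_norm (phi : G -> F) s c : (forall e, e \in s -> `|phi e| = 1) -> `|lp phi s c| = 1.
Proof.
move=> h; rewrite /lp normr_prod big_seq big1 // => e es.
exact: norm_exprz1 (h e es).
Qed.

Lemma lcN (s : seq G) (c : G -> int) : lc s (fun e => - c e) = - lc s c.
Proof. by rewrite /lc -sumrN; apply: eq_bigr => e _; rewrite mulrNz. Qed.

Lemma lpN (phi : G -> F) (s : seq G) (c : G -> int) : lp phi s (fun e => - c e) = (lp phi s c)^-1.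
Proof. by rewrite /lp -prodfV; apply: eq_bigr => e _; rewrite invr_expz. Qed.

Lemma ext_phi (E : G -> Prop) (phi : G -> F) :
  (forall e, E e -> `|phi e| = 1) ->
  (forall s c, uniq s -> (forall e, e \in s -> E e) -> lc s c = 0 -> lp phi s c = 1) ->
  exists chi : G -> F, pchar (fun _ => True) chi /\ forall e, E e -> chi e = phi e.
Proof.
move=> hn hrel.
have nz : forall e, E e -> phi e != 0.
  by move=> e Ee; rewrite -normr_eq0 hn // oner_eq0.
pose P y (sc : seq G * (G -> int)) :=
  [/\ uniq sc.1, (forall e, e \in sc.1 -> E e) & lc sc.1 sc.2 = y].
pose S0 y := exists sc, P y sc.
pose f0 y := match pselect (S0 y) with
  | left h => lp phi (proj1_sig (cid h)).1 (proj1_sig (cid h)).2 | right _ => 1 end.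
have Ecat : forall s s', (forall e, e \in s -> E e) -> (forall e, e \in s' -> E e) ->
    forall e, e \in undup (s ++ s') -> E e.
  by move=> s s' h h' e; rewrite mem_undup mem_cat => /orP[/h|/h'].
have f0E : forall y s c, P y (s, c) -> f0 y = lp phi s c.
  move=> y s c [/= us Es ly]; rewrite /f0; case: pselect => [h|nh]; last first.
    by exfalso; apply: nh; exists (s, c).
  case: (cid h) => [[s' c']] [/= us' Es' ly'] /=.
  have [m1 m2] := merge F c' c us' us.
  have Eu := Ecat _ _ Es' Es.
  have := hrel (undup (s' ++ s)) (fun e => (if e \in s' then c' e else 0) - (if e \in s then c e else 0)) (undup_uniq _) Eu.
  rewrite m1 /= ly ly' subrr => /(_ erefl).
  rewrite m2; last by move=> e /Eu /nz.
  move=> /(congr1 (fun x => x * lp phi s c)); rewrite mul1r divfK //.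
  by apply: lp_neq0 => e /Es /nz.
have hS0 : pchar S0 f0.
  split; [split|split].
  - by exists ([::], fun _ => 0); split => //; rewrite /lc big_nil.
  - move=> a b [[s c] [us Es la]] [[s' c'] [us' Es' lb]] /=.
    have [m1 _] := merge F c c' us us'.
    exists (undup (s ++ s'), fun e => (if e \in s then c e else 0) -
       (if e \in s' then c' e else 0)).
    by split => //=; [exact: undup_uniq | exact: Ecat | rewrite m1 la lb].
  - move=> a [[s c] Pa]; rewrite (f0E _ _ _ Pa); apply: lp_norm => e es.
    by apply: hn; case: Pa => _ /(_ e es).
  move=> a b [[s c] Pa] [[s' c'] Pb].
  case: Pa => /= us Es la; case: Pb => /= us' Es' lb.
  have [m1 m2] := merge F c (fun e => - c' e) us us'.
  rewrite (f0E a s c) // (f0E b s' c') //.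
  rewrite (f0E (a + b) (undup (s ++ s')) (fun e => (if e \in s then c e else 0) -
       (if e \in s' then - c' e else 0))).
    by rewrite m2 ?lpN ?invrK // => e /(Ecat _ _ Es Es') /nz.
  by split => //=; [exact: undup_uniq | exact: Ecat | rewrite m1 lcN la lb opprK].
have [chi [hchi hb]] := ext_from_base hS0.
exists chi; split => // e Ee.
have Pe : P e ([:: e], fun _ => 1).
  by split => //=; [move=> x; rewrite inE => /eqP -> | rewrite /lc big_seq1 mulr1z].
by rewrite hb; [rewrite (f0E _ _ _ Pe) /lp big_seq1 expr1z | exists ([:: e], fun _ => 1)].
Qed.

End Base.

Definition Rel (G : zmodType) (M : nat) (E : G -> Prop) :=
  forall (s : seq G) (c : G -> int), uniq s -> (forall e, e \in s -> E e) ->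
  lc s c = 0 -> forall e, e \in s -> (M %| `|c e|)%N.

Lemma char_pc (R : realType) (G : zmodType) (x : G -> R[i]) :
  is_character x -> pchar (fun _ => True) x.
Proof. by move=> [h1 h2]; split; [split|split]. Qed.

Lemma pc_char (R : realType) (G : zmodType) (x : G -> R[i]) :
  pchar (fun _ => True) x -> is_character x.
Proof. by move=> [_ [h1 h2]]; split => *; [apply: h1 | apply: h2]. Qed.

Lemma Rel_PR (R : realType) (G : zmodType) M (E : G -> Prop) :
  (0 < M)%N -> Rel M E -> PR R M E.
Proof.
move=> M0 hR phi hphi.
have hn : forall e, E e -> `|phi e| = 1.
  move=> e Ee; apply/eqP; rewrite -(pexpr_eq1 M0) ?normr_ge0 //.
  by rewrite -normrX hphi // normr1.
have hrel : forall s c, uniq s -> (forall e, e \in s -> E e) -> lc s c = 0 ->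
    lp phi s c = 1.
  move=> s c us Es l0; rewrite /lp big_seq big1 // => e es.
  have : (M%:Z %| c e)%Z by rewrite dvdzE; exact: hR s c us Es l0 e es.
  move/divzK => <-; rewrite mulrC -exprz_exp -exprnP hphi ?exp1rz //; exact: Es.
have [chi [hc he]] := ext_phi hn hrel.
by exists chi; split; [exact: pc_char | move=> g Eg; exact: he].
Qed.

Lemma prim_exists (F : numClosedFieldType) n : (0 < n)%N ->
  exists z : F, n.-primitive_root z.
Proof.
pose p : {poly F} := 'X^n - 1; have [r Dp] := closed_field_poly_normal p.
move=> n_gt0; rewrite (monicP _) ?monicXnsubC // scale1r in Dp.
have rn1: all n.-unity_root r by apply/allP=> z; rewrite -root_prod_XsubC -Dp.
have sz_r: (n < (size r).+1)%N.
  by rewrite -(size_prod_XsubC r id) -Dp size_XnsubC.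
have [|z] := hasP (has_prim_root n_gt0 rn1 _ sz_r); last by exists z.
by rewrite -separable_prod_XsubC -Dp separable_Xn_sub_1 // pnatr_eq0 -lt0n.
Qed.

Lemma PR_Rel (R : realType) (G : zmodType) M (E : G -> Prop) :
  (0 < M)%N -> PR R M E -> Rel M E.
Proof.
move=> M0 hP s c us Es l0 e0 e0s.
have [z pz] := prim_exists (R[i]) M0.
pose phi (g : G) : R[i] := if g == e0 then z else 1.
have hphi : forall g, E g -> phi g ^+ M = 1.
  by move=> g _; rewrite /phi; case: eqP => _; [exact: prim_expr_order pz | exact: expr1n].
have [x [hx hxe]] := hP phi hphi.
  have hpc := char_pc hx.
  have [_ hl] := pc_lc (s:=s) c hpc (fun e _ => I).
  rewrite l0 (pc0 hpc) in hl.
  have : lp phi s c = 1.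
    by rewrite hl /lp; apply: eq_big_seq => e es; rewrite hxe //; exact: Es.
  rewrite /lp (bigD1_seq e0) //= big1_seq ?mulr1; last first.
    by move=> e /andP[ne _]; rewrite /phi (negbTE ne) exp1rz.
  rewrite /phi eqxx.
  case: (c e0) => n /=.
    by rewrite -exprnP => /eqP; rewrite -(prim_order_dvd pz).
  by rewrite NegzE -exprnN => /eqP; rewrite invr_eq1 -(prim_order_dvd pz).
Qed.

Section Quot.
Variables (G Q : zmodType) (H : G -> Prop) (pi : G -> Q).
Hypothesis hq : is_quotient_map H pi.

Lemma pi0 : pi 0 = 0.
Proof. by have := hq.1 0 0; rewrite !subrr. Qed.

Lemma piN a : pi (- a) = - pi a.
Proof. by have := hq.1 0 a; rewrite pi0 !sub0r. Qed.

Lemma piD a b : pi (a + b) = pi a + pi b.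
Proof. by rewrite -{1}[b]opprK hq.1 piN opprK. Qed.

Lemma piMn a n : pi (a *+ n) = pi a *+ n.
Proof. by elim: n => [|n IH]; rewrite ?mulr0n ?pi0 // !mulrS piD IH. Qed.

Lemma piMz a k : pi (a *~ k) = pi a *~ k.
Proof.
case: k => n; first by rewrite -!pmulrn piMn.
by rewrite NegzE !mulrNz piN -!pmulrn piMn.
Qed.

Lemma pi_sum (I : Type) (r : seq I) (F : I -> G) :
  pi (\sum_(i <- r) F i) = \sum_(i <- r) pi (F i).
Proof. by elim: r => [|x r IH]; rewrite ?big_nil ?pi0 // !big_cons piD IH. Qed.

Lemma pi_lc s c : pi (lc s c) = \sum_(e <- s) pi e *~ c e.
Proof. by rewrite /lc pi_sum; apply: eq_bigr => e _; rewrite piMz. Qed.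

Definition lift (E : G -> Prop) (q : Q) : G :=
  match pselect (exists e, E e /\ pi e = q) with
  | left h => proj1_sig (cid h) | right _ => 0 end.

Lemma liftP E q : img pi E q -> E (lift E q) /\ pi (lift E q) = q.
Proof.
move=> [e Ee pe]; rewrite /lift; case: pselect => [h|nh]; last first.
  by exfalso; apply: nh; exists e.
by case: (cid h).
Qed.

End Quot.

Section Prime.
Variables (G Q : zmodType) (p n : nat) (pi : G -> Q).
Hypotheses (pp : prime p) (n0 : (0 < n)%N) (hq : is_quotient_map (Gamma_pm p n) pi).
Variable E : G -> Prop.

Lemma keyK : Rel (p ^ n) E -> forall s c, uniq s -> (forall e, e \in s -> E e) ->
  Gamma_pm p n (lc s c) -> forall e, e \in s -> (p %| `|c e|)%N.
Proof.
move=> hR s c us Es [m [[m0 [hm hmin]] nd]] e es.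
have l0 : lc s (fun e => c e * m%:Z) = 0.
  rewrite /lc; under eq_bigr => x _ do rewrite mulrzA.
  by rewrite -mulrz_suml -pmulrn hm.
have := hR s _ us Es l0 e es; rewrite abszM /=.
case: (boolP (p %| `|c e|)%N) => // npc.
have cop : coprime (p ^ n) `|c e| by rewrite coprime_pexpl // prime_coprime.
by rewrite Gauss_dvdr // (negbTE nd).
Qed.

Lemma fwd : Rel (p ^ n) E ->
  (forall a b, E a -> E b -> pi a = pi b -> a = b) /\ Rel p (img pi E).
Proof.
move=> hR; split.
  move=> a b Ea Eb pab; apply: contrapT => nab.
  have nab' : a != b by apply/eqP.
  have := keyK hR (s:=[:: a; b]) (c:=fun g => if g == a then 1 else -1).
  rewrite /= inE nab' /= => /(_ isT).
  have Es : forall e, e \in [:: a; b] -> E e.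
    by move=> e; rewrite !inE => /orP[/eqP->|/eqP->].
  move=> /(_ Es).
  have Hab : Gamma_pm p n (lc [:: a; b] (fun g => if g == a then 1 else -1)).
    apply/(hq.2.2); rewrite /lc big_cons big_seq1 eqxx eq_sym (negbTE nab').
    by rewrite mulr1z mulrN1z hq.1 pab subrr.
  move=> /(_ Hab a); rewrite inE eqxx /= => /(_ isT).
  by rewrite dvdn1 => /eqP p1; move: pp; rewrite p1.
move=> t d ut Et l0 q0 q0t.
pose lf := lift pi E.
have lfP : forall q, q \in t -> E (lf q) /\ pi (lf q) = q.
  by move=> q qt; apply: liftP; apply: Et.
have us : uniq (map lf t).
  rewrite map_inj_in_uniq // => x y xt yt exy.
  by rewrite -(lfP x xt).2 -(lfP y yt).2 exy.
have Es : forall e, e \in map lf t -> E e.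
  by move=> e /mapP[q qt ->]; exact: (lfP q qt).1.
have Hl : Gamma_pm p n (lc (map lf t) (fun e => d (pi e))).
  apply/(hq.2.2); rewrite (pi_lc hq) big_map -[RHS]l0 /lc.
  by apply: eq_big_seq => q qt; rewrite (lfP q qt).2.
have := keyK hR (c:=fun e => d (pi e)) us Es Hl (map_f lf q0t).
by rewrite (lfP q0 q0t).2.
Qed.

Lemma bwd : (forall a b, E a -> E b -> pi a = pi b -> a = b) -> Rel p (img pi E) ->
  Rel (p ^ n) E.
Proof.
move=> inj hR.
have K' : forall s c, uniq s -> (forall e, e \in s -> E e) ->
    Gamma_pm p n (lc s c) -> forall e, e \in s -> (p %| `|c e|)%N.
  move=> s c us Es Hs.
  pose lf := lift pi E.
  have lfe : forall e, e \in s -> lf (pi e) = e.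
    move=> e es; have [El pl] := liftP (ex_intro2 (fun x => E x) (fun x => pi x = pi e) e (Es e es) erefl).
    by apply: inj => //; exact: Es.
  have ut : uniq (map pi s).
    by rewrite map_inj_in_uniq // => x y xs ys; apply: inj; apply: Es.
  have Et : forall q, q \in map pi s -> img pi E q.
    by move=> q /mapP[e es ->]; exists e => //; exact: Es.
  have l0 : lc (map pi s) (fun q => c (lf q)) = 0.
    rewrite {1}/lc big_map; transitivity (pi (lc s c)); last exact: (hq.2.2 _).2 Hs.
    by rewrite (pi_lc hq); apply: eq_big_seq => e es; rewrite lfe.
  move=> e es; have := hR _ _ ut Et l0 (pi e) (map_f pi es).
  by rewrite lfe.
move=> s c us Es l0.
have p1 : (1 < p)%N by exact: prime_gt1.
suff : forall j, (j <= n)%N -> forall e, e \in s -> (p ^ j %| `|c e|)%N.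
  by move=> h; apply: h.
elim=> [|j IH] jn e es; first by rewrite expn0 dvd1n.
have hj : forall e, e \in s -> (p ^ j %| `|c e|)%N by apply: IH; exact: ltnW.
pose d e := (c e %/ (p ^ j)%:Z)%Z.
have cd : forall e, e \in s -> c e = d e * (p ^ j)%:Z.
  move=> x xs; rewrite /d divzK //; rewrite dvdzE; exact: hj.
pose y := lc s d.
have hy : y *+ (p ^ j) = 0.
  rewrite -l0 /y /lc pmulrn mulrz_suml; apply: eq_big_seq => x xs.
  by rewrite cd // mulrzA.
have ex : exists m, (0 < m)%N && (y *+ m == 0).
  by exists (p ^ j)%N; rewrite expn_gt0 prime_gt0 //= hy eqxx.
case: (ex_minnP ex) => m /andP[m0 /eqP ym] mmin.
have mdvd : (m %| p ^ j)%N.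
  have r0 : (p ^ j %% m = 0)%N.
    apply/eqP; rewrite -leqn0 leqNgt; apply/negP => r0.
    have : y *+ (p ^ j %% m) = 0.
      by move: hy; rewrite {1}(divn_eq (p ^ j) m) mulrnDr mulnC mulrnA ym mul0rn add0r.
    move=> /eqP yr; have := mmin _ (introT andP (conj r0 yr)).
    by rewrite leqNgt ltn_pmod.
  by apply/dvdnP; exists (p ^ j %/ m)%N; rewrite {1}(divn_eq (p ^ j) m) r0 addn0.
have Hy : Gamma_pm p n y.
  exists m; split.
    split => //; split => // k k0 km yk.
    by have := mmin k (introT andP (conj k0 (introT eqP yk))); rewrite leqNgt km.
  have pj0 : (0 < p ^ j)%N by rewrite expn_gt0 prime_gt0.
  apply/negP => /(dvdn_trans)/(_ mdvd) /(dvdn_leq pj0).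
  by rewrite leqNgt ltn_exp2l // jn.
have := K' s d us Es Hy e es.
rewrite cd // abszM /= expnSr mulnC => hd.
by rewrite dvdn_mul.
Qed.

End Prime.

Lemma coprime_prod_seq (I : eqType) (r : seq I) (F : I -> nat) a :
  (forall j, j \in r -> coprime a (F j)) -> coprime a (\prod_(j <- r) F j).
Proof.
elim: r => [|j r IH] h; first by rewrite big_nil coprimen1.
rewrite big_cons coprimeMr h ?inE ?eqxx //=.
by apply: IH => x xr; apply: h; rewrite inE xr orbT.
Qed.

Lemma prod_dvd_seq (I : eqType) (r : seq I) (F : I -> nat) m :
  uniq r -> (forall i j, i \in r -> j \in r -> i != j -> coprime (F i) (F j)) ->
  (forall i, i \in r -> (F i %| m)%N) -> (\prod_(i <- r) F i %| m)%N.
Proof.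
elim: r => [|i r IH] /=; first by rewrite big_nil dvd1n.
move=> /andP[ir ur] hc hd; rewrite big_cons Gauss_dvd.
  rewrite hd ?inE ?eqxx //=; apply: IH => //.
    by move=> x y xr yr; apply: hc; rewrite inE ?xr ?yr orbT.
  by move=> x xr; apply: hd; rewrite inE xr orbT.
apply: coprime_prod_seq => j jr; apply: hc; rewrite ?inE ?eqxx ?jr ?orbT //.
by apply/eqP => ij; move: ir; rewrite ij jr.
Qed.

Unset Implicit Arguments.

Theorem corollary3p4 (R : realType) (Gamma : zmodType) (k : nat)
    (p n : 'I_k -> nat) (Q : 'I_k -> zmodType) (pi : forall i, Gamma -> Q i)
    (N : nat) (E : Gamma -> Prop) :
  (forall i, prime (p i)) -> injective p -> (forall i, (0 < n i)%N) ->
  N = (\prod_(i < k) p i ^ n i)%N ->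
  (forall i, is_quotient_map (Gamma_pm (p i) (n i)) (pi i)) ->
  (PR R N E <->
   (forall i, (forall a b, E a -> E b -> pi i a = pi i b -> a = b) /\
              PR R (p i) (img (pi i) E))).
Proof.
move=> pp pinj n0 -> hq.
have N0 : (0 < \prod_(i < k) p i ^ n i)%N.
  by rewrite prodn_gt0 // => i; rewrite expn_gt0 prime_gt0.
split.
  move=> hP i; have hR := PR_Rel N0 hP.
  have hRi : Rel (p i ^ n i) E.
    move=> s c us Es l0 e es; apply: dvdn_trans (hR s c us Es l0 e es).
    by rewrite (bigD1 i) //= dvdn_mulr.
  have [inj hRel] := fwd (pp i) (n0 i) (hq i) hRi.
  by split => //; apply: Rel_PR (prime_gt0 (pp i)) hRel.
move=> h; apply: Rel_PR N0 _ => s c us Es l0 e es.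
have hi : forall i, (p i ^ n i %| `|c e|)%N.
  move=> i; have [inj pr] := h i.
  exact: (bwd (pp i) (hq i) inj (PR_Rel (prime_gt0 (pp i)) pr) us Es l0 es).
apply: (prod_dvd_seq (r := index_enum 'I_k)) => //; first exact: index_enum_uniq.
move=> i j _ _ ij; rewrite coprime_pexpl ?coprime_pexpr // prime_coprime //.
by rewrite dvdn_prime2 //; apply/eqP => /pinj /eqP; apply/negP.
Qed.
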